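(* Let $X,Y,Z$ be shift spaces, $\phi_1 : X \to Z$ and $\phi_2 : Y \to Z$ codes, and let $\Sigma = \{(x,y) \in X \times Y : \phi_1(x) = \phi_2(y)\}$ with $\psi_1 : \Sigma \to X$, $\psi_1(x,y)=x$, and $\psi_2 : \Sigma \to Y$, $\psi_2(x,y) = y$. Then: (1) If $\phi_1$ is open, then $\psi_2$ is open. (2) If $\phi_2$ is onto and $\psi_2$ is open, then $\phi_1$ is open.
   Context: Shift spaces are closed shift-invariant subsets of $\mathcal{A}^{\mathbb{Z}}$; a code is a continuous shift-commuting map. $\Sigma$ (with coordinatewise shift) is a shift space, called the fiber product. Open: images of open sets are open. *)

(* Defs.v *)
From mathcomp Require Import all_boot all_order all_algebra.
Set Implicit Arguments. Unset Strict Implicit. Unset Printing Implicit Defensive.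
Import Order.TTheory GRing.Theory Num.Theory.
Local Open Scope ring_scope.

Definition conf (A : Type) := int -> A.

Definition cset (A : Type) := conf A -> Prop.

Definition shift (A : Type) (x : conf A) : conf A := fun i => x (i + 1).

(* x and y agree on the central window [-n, n]; the sets
   {y | agree_on n x y} are the basic (cylinder) neighbourhoods of x
   in the product topology of A^Z (A finite, discrete). *)
Definition agree_on (A : Type) (n : nat) (x y : conf A) : Prop :=
  forall i : int, - (n%:Z) <= i <= n%:Z -> x i = y i.

Definition closed_set (A : Type) (X : cset A) : Prop :=
  forall x : conf A, (forall n : nat, exists y, X y /\ agree_on n x y) -> X x.

(* Shift space: closed and shift-invariant (sigma(X) = X, equivalently
   sigma^{-1}(X) = X since sigma is a bijection). *)
Definition shift_space (A : finType) (X : cset A) : Prop :=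
  closed_set X /\ (forall x : conf A, X x <-> X (shift x)).

Definition rel_open (A : Type) (X U : cset A) : Prop :=
  (forall x, U x -> X x) /\
  (forall x, U x -> exists n : nat, forall y, X y -> agree_on n x y -> U y).

Definition cont_on (A B : Type) (X : cset A) (f : conf A -> conf B) : Prop :=
  forall x, X x -> forall n : nat, exists m : nat,
    forall y, X y -> agree_on m x y -> agree_on n (f x) (f y).

Definition code (A B : finType) (X : cset A) (Y : cset B)
  (f : conf A -> conf B) : Prop :=
  (forall x, X x -> Y (f x)) /\ cont_on X f /\
  (forall x, X x -> f (shift x) = shift (f x)).

Definition image_set (A B : Type) (f : conf A -> conf B) (U : cset A) : cset B :=
  fun y => exists x, U x /\ f x = y.

Definition open_map (A B : Type) (X : cset A) (Y : cset B)
  (f : conf A -> conf B) : Prop :=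
  forall U, rel_open X U -> rel_open Y (image_set f U).

Definition onto_on (A B : Type) (X : cset A) (Y : cset B)
  (f : conf A -> conf B) : Prop :=
  forall y, Y y -> exists x, X x /\ f x = y.

Definition proj1c (A B : Type) (w : conf (A * B)) : conf A := fun i => (w i).1.
Definition proj2c (A B : Type) (w : conf (A * B)) : conf B := fun i => (w i).2.

Definition fiber_product (A B C : Type) (X : cset A) (Y : cset B)
  (phi1 : conf A -> conf C) (phi2 : conf B -> conf C) : cset (A * B) :=
  fun w => X (proj1c w) /\ Y (proj2c w) /\ phi1 (proj1c w) = phi2 (proj2c w).

(* Main.v *)
Require Import Defs.
From mathcomp Require Import all_boot all_order all_algebra.
From mathcomp Require Import zify.
From Stdlib Require Import Classical ClassicalEpsilon FunctionalExtensionality.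
Import Order.TTheory GRing.Theory Num.Theory.
Local Open Scope ring_scope.

Definition inf (S : nat -> Prop) := forall N, exists m, (N <= m)%N /\ S m.

Lemma pig (T : finType) (S : nat -> Prop) (g : nat -> T) :
  inf S -> exists t, inf (fun m => S m /\ g m = t).
Proof.
move=> HS; apply: NNPP => Hn.
have H1 : forall t, exists N, forall m, (N <= m)%N -> ~ (S m /\ g m = t).
  move=> t; apply: NNPP => H; apply: Hn; exists t => N.
  apply: NNPP => H2; apply: H; exists N => m Hm Hsm; apply: H2; by exists m.
pose Nf t := proj1_sig (constructive_indefinite_description _ (H1 t)).
have HNf t : forall m, (Nf t <= m)%N -> ~ (S m /\ g m = t).
  exact: (proj2_sig (constructive_indefinite_description _ (H1 t))).
have [m [Hm Sm]] := HS (\max_(t : T) Nf t).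
apply: (HNf (g m) m) => //.
apply: leq_trans Hm; exact: leq_bigmax.
Qed.

Section Cluster.
Variable (B : finType) (s : nat -> conf B).
Definition b0 := s 0%N 0.
Definition g (k : nat) (m : nat) : B * B := (s m (- (k%:Z)), s m (k%:Z)).
Definition choose (S : nat -> Prop) (k : nat) : B * B :=
  epsilon (inhabits (b0, b0)) (fun t => inf S -> inf (fun m => S m /\ g k m = t)).
Fixpoint Sk (k : nat) : nat -> Prop :=
  match k with
  | 0%N => fun _ => True
  | k'.+1 => fun m => Sk k' m /\ g k' m = choose (Sk k') k'
  end.
Definition t k := choose (Sk k) k.

Lemma choose_spec S k : inf S -> inf (fun m => S m /\ g k m = choose S k).
Proof.
move=> HS; apply: (epsilon_spec (inhabits (b0, b0))
  (fun t => inf S -> inf (fun m => S m /\ g k m = t))) => //.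
have [t0 Ht0] := @pig (B * B)%type S (g k) HS; by exists t0.
Qed.

Lemma Sk_inf k : inf (Sk k).
Proof.
elim: k => [|k IH]; first by move=> N; exists N.
exact: (@choose_spec (Sk k) k IH).
Qed.

Lemma Sk_mono k j m : (k <= j)%N -> Sk j m -> Sk k m.
Proof.
elim: j => [|j IH]; first by rewrite leqn0 => /eqP ->.
rewrite leq_eqVlt => /orP [/eqP -> //| Hk] [H _].
by apply: IH.
Qed.

Definition ylim (i : int) : B :=
  match i with Posz k => (t k).2 | Negz k => (t k.+1).1 end.

Lemma cluster : forall n N, exists m, (N <= m)%N /\ agree_on n ylim (s m).
Proof.
move=> n N; have [m [Hm Sm]] := Sk_inf n.+1 N.
exists m; split => // i; case: i => [k|k] Hi /=.
- have Hk : (k.+1 <= n.+1)%N by lia.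
  have [_ E] := Sk_mono _ _ _ Hk Sm.
  by rewrite /t -E.
- have Hk : (k.+2 <= n.+1)%N by lia.
  have [_ E] := Sk_mono _ _ _ Hk Sm.
  by rewrite /t -E /g NegzE.
Qed.
End Cluster.

Lemma agree_refl (A : Type) n (x : conf A) : agree_on n x x.
Proof. by []. Qed.

Lemma agree_trans (A : Type) n (x y z : conf A) :
  agree_on n x y -> agree_on n y z -> agree_on n x z.
Proof. by move=> H1 H2 i Hi; rewrite H1 // H2. Qed.

Lemma agree_mono (A : Type) n m (x y : conf A) :
  (n <= m)%N -> agree_on m x y -> agree_on n x y.
Proof. move=> Hnm H i Hi; apply: H; lia. Qed.

Theorem lemma2p4 (A B C : finType) (X : cset A) (Y : cset B) (Z : cset C)
  (phi1 : conf A -> conf C) (phi2 : conf B -> conf C) :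
  shift_space X -> shift_space Y -> shift_space Z ->
  code X Z phi1 -> code Y Z phi2 ->
  (open_map X Z phi1 ->
     open_map (fiber_product X Y phi1 phi2) Y (@proj2c A B)) /\
  (onto_on Y Z phi2 ->
     open_map (fiber_product X Y phi1 phi2) Y (@proj2c A B) ->
     open_map X Z phi1).
Proof.
move=> [cX sX] [cY sY] [cZ sZ] [c1X [c1c c1s]] [c2X [c2c c2s]]; split.
- move=> op1 U [US Uo]; split.
  + move=> y [w [Uw <-]]; by case: (US w Uw) => _ [].
  + move=> y [w [Uw <-]]; have [Xw [Yw Ew]] := US w Uw.
    have [n Hn] := Uo w Uw.
    pose V := fun x' => X x' /\ agree_on n (proj1c w) x'.
    have oV : rel_open X V.
      split; first by move=> ? [].
      move=> x' [Xx' Ax']; exists n => y' Xy' Ay'; split => //.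
      exact: agree_trans Ax' Ay'.
    have [_ oI] := op1 V oV.
    have Im : image_set phi1 V (phi1 (proj1c w)).
      by exists (proj1c w); split => //; split => //.
    have [m Hm] := oI _ Im.
    have [k Hk] := c2c (proj2c w) Yw m.
    exists (maxn n k) => y' Yy' Ay'.
    have : image_set phi1 V (phi2 y').
      apply: Hm; first exact: c2X.
      rewrite Ew; apply: Hk => //; apply: agree_mono Ay'; lia.
    case=> x' [[Xx' Ax'] Ex'].
    exists (fun i => (x' i, y' i)); split; last by [].
    apply: Hn.
      split => //; split => //.
    move=> i Hi /=.
    have Ay'' : agree_on n (proj2c w) y' by apply: agree_mono Ay'; lia.
    rewrite -(Ax' i Hi) -(Ay'' i Hi) /proj1c /proj2c.
    by case: (w i).
- move=> on2 op2 U [UX Uo]; split.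
  + move=> z [x [Ux <-]]; apply: c1X; auto.
  + move=> z [x [Ux <-]]; apply: NNPP => Hno.
    have Hm : forall m, exists y', Y y' /\ agree_on m (phi1 x) (phi2 y') /\
                ~ image_set phi1 U (phi2 y').
      move=> m; apply: NNPP => H; apply: Hno; exists m => z' Zz' Az'.
      apply: NNPP => Hi; apply: H.
      have [y' [Yy' Ey']] := on2 z' Zz'.
      by exists y'; rewrite Ey'.
    pose s m := proj1_sig (constructive_indefinite_description _ (Hm m)).
    have Hs m : Y (s m) /\ agree_on m (phi1 x) (phi2 (s m)) /\
                ~ image_set phi1 U (phi2 (s m)).
      exact: (proj2_sig (constructive_indefinite_description _ (Hm m))).
    have Hcl := @cluster B s.
    set y := @ylim B s in Hcl.
    have Yy : Y y.
      apply: cY => n; have [m [_ Hmm]] := Hcl n 0%N.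
      by exists (s m); split => //; case: (Hs m).
    have Ey : phi1 x = phi2 y.
      apply: functional_extensionality => i.
      have [k Hk] := c2c y Yy `|i|%N.
      have [m [Hmn Am]] := Hcl k `|i|%N.
      have [Ysm [Asm _]] := Hs m.
      have Hi : - (`|i|%N%:Z) <= i <= `|i|%N%:Z by lia.
      have Hi' : - (m%:Z) <= i <= m%:Z by lia.
      by rewrite (Asm i Hi') (Hk (s m) Ysm Am i Hi).
    pose W := fun w => fiber_product X Y phi1 phi2 w /\ U (proj1c w).
    have oW : rel_open (fiber_product X Y phi1 phi2) W.
      split; first by move=> ? [].
      move=> w [Sw Uw]; have [n Hn] := Uo _ Uw.
      exists n => w' Sw' Aw'; split => //; apply: Hn; first by case: Sw'.
      by move=> i Hi; rewrite /proj1c (Aw' i Hi).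
    have [_ oI] := op2 W oW.
    have Wp : W (fun i => (x i, y i)).
      split => //; split; first exact: UX.
      by split.
    have [n Hn] := oI y (ex_intro _ _ (conj Wp erefl)).
    have [m [_ Am]] := Hcl n 0%N.
    have [Ysm [_ Nsm]] := Hs m.
    have [w [[[_ [_ Ew]] Uw] Pw]] := Hn (s m) Ysm Am.
    apply: Nsm; exists (proj1c w); split => //.
    by rewrite Ew Pw.
Qed.
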